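(* The matrix $L_n$ satisfies $L_n\ge0$ entrywise and $L_n^\top\varphi_n<\varphi_n$ entrywise; consequently its spectral radius is $<1$, $\mathrm I_n-L_n$ is a nonsingular $M$-matrix and $(\mathrm I_n-L_n)^{-1}\ge0$ entrywise. Set $u_n=(\mathrm I_n-L_n)^{-1}V_n$, $v_n=(\mathrm I_n-L_n)^{-1}U_n$ and $\vartheta_n^\star=-\frac{\mathbf 1_n^\top v_n}{\mathbf 1_n^\top u_n}$ (with $\mathbf 1_n^\top u_n\neq0$). Then the unique maximiser $(\bar z_n^Q,\bar z_n^S)$ of $g$ on $\mathfrak F_n$ is given by $$\bar z_n^S=u_n\vartheta_n^\star+v_n,\qquad \bar z_n^{Q,i,j}=p_{i,j}\Big(n\bar\mu_{j,n}+\frac1{c_i}\mathbf 1_{\{i=j\}}-\frac{\gamma_i\sigma}{\sqrt n}\bar z_n^{S,i}\rho_j\nu_j\Big),$$ where $\bar\mu_{j,n}=\frac{1}{n\Theta_{j,n}}\Big(1-\zeta_j-\frac{\sigma}{\sqrt n}a_j\bar z_n^{S,j}\Big)$.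
   Context: Fix $n\ge1$, $\sigma>0$, and for each $i$: $c_i>0$, $\gamma_i>0$, $\nu_i>0$, $\rho_i\in(-1,1)$; $\rho=(\rho_i)$. Variables $z^Q=(z^{Q,i,j})\in\mathbb{R}^{n\times n}$ ($i$ row, $j$ column), $z^S\in\mathbb{R}^n$. Define $$g(z^Q,z^S)=-\frac1n\sum_{i=1}^n\Big(\frac{(z^{Q,i,i})^2}{2c_i}+\frac{\gamma_i}{2}\sum_{j=1}^n\nu_j^2(z^{Q,i,j})^2+\frac{\gamma_i\sigma^2}{2}(z^{S,i})^2+\frac{\gamma_i\sigma}{\sqrt n}z^{S,i}\sum_{j=1}^n\rho_j\nu_jz^{Q,i,j}\Big)+\frac1n\sum_{i=1}^n\frac{z^{Q,i,i}}{c_i},$$ and $\mathfrak F_n=\{(z^Q,z^S):\sum_{i=1}^nz^{Q,i,j}=1\ \forall j,\ \sum_{k=1}^nz^{S,k}=0\}$. Define $p_{i,j}=\frac{1}{\gamma_i\nu_j^2}$ for $j\ne i$ and $p_{i,i}=\frac{1}{\gamma_i\nu_i^2+1/c_i}$; for each $j$: $\Theta_{j,n}=\sum_{i=1}^np_{i,j}$, $\zeta_j=p_{j,j}/c_j\in(0,1)$, $a_j=\rho_j\zeta_j/\nu_j$, $w_{j,n}=\frac{1}{n\Theta_{j,n}}$; for each $k$: $M_{k,j}=\rho_j\nu_jp_{k,j}$, $\upsilon_{k,n}=\sum_{j=1}^n\rho_j^2\nu_j^2p_{k,j}$, $\varphi_{k,n}=1-\frac{\gamma_k}{n}\upsilon_{k,n}$,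 $\varphi_n=(\varphi_{k,n})_k$. Define the $n\times n$ matrix $L_n$ by $(L_n)_{k,j}=\frac{1}{\varphi_{k,n}}w_{j,n}a_jM_{k,j}=\frac{\rho_j^2\zeta_jp_{k,j}}{n\varphi_{k,n}\Theta_{j,n}}$, and vectors $V_n,U_n\in\mathbb{R}^n$ by $(V_n)_k=\frac{n}{\gamma_k\sigma^2\varphi_{k,n}}$ and $(U_n)_k=-\frac{1}{\varphi_{k,n}}(C_{k,n}+r_{k,n})$, where $C_{k,n}=\frac{1}{\sigma\sqrt n}\sum_{j=1}^n\frac{1-\zeta_j}{\Theta_{j,n}}M_{k,j}$ and $r_{k,n}=\frac{1}{\sigma\sqrt n}\frac{\rho_k\nu_k}{c_k}p_{k,k}$. *)

(* Defs.v *)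
(* R is an arbitrary real closed field (covers the reals);
   eigenvalues are taken in the algebraic closure R[i] = complex R. *)
From HB Require Import structures.
From mathcomp Require Import all_boot all_order all_algebra.
From mathcomp Require Import complex.
Set Implicit Arguments. Unset Strict Implicit. Unset Printing Implicit Defensive.
Import Order.TTheory GRing.Theory Num.Theory.
Local Open Scope ring_scope.

Section Model.
Variable R : rcfType.
Variable n : nat.
Variable sigma : R.
Variables (c gam nu rho : 'I_n -> R).

Local Notation sqn := (Num.sqrt (n%:R : R)).

(* objective g(z^Q, z^S); zQ i j = z^{Q,i,j} (i row, j column) *)
Definition gobj (zQ : 'M[R]_n) (zS : 'cV[R]_n) : R :=
  - (1 / n%:R) * \sum_(i < n)
      ( zQ i i ^+ 2 / (2 * c i)
      + gam i / 2 * \sum_(j < n) nu j ^+ 2 * zQ i j ^+ 2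
      + gam i * sigma ^+ 2 / 2 * zS i 0 ^+ 2
      + gam i * sigma / sqn * zS i 0 * \sum_(j < n) rho j * nu j * zQ i j )
  + (1 / n%:R) * \sum_(i < n) zQ i i / c i.

Definition feasible (zQ : 'M[R]_n) (zS : 'cV[R]_n) : Prop :=
  (forall j : 'I_n, \sum_(i < n) zQ i j = 1) /\ \sum_(k < n) zS k 0 = 0.

Definition pcoef (i j : 'I_n) : R :=
  if i == j then 1 / (gam i * nu i ^+ 2 + 1 / c i) else 1 / (gam i * nu j ^+ 2).
Definition Theta (j : 'I_n) : R := \sum_(i < n) pcoef i j.
Definition zeta (j : 'I_n) : R := pcoef j j / c j.
Definition acoef (j : 'I_n) : R := rho j * zeta j / nu j.
Definition wcoef (j : 'I_n) : R := 1 / (n%:R * Theta j).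
Definition Mcoef (k j : 'I_n) : R := rho j * nu j * pcoef k j.
Definition upsilon (k : 'I_n) : R := \sum_(j < n) rho j ^+ 2 * nu j ^+ 2 * pcoef k j.
Definition phi (k : 'I_n) : R := 1 - gam k / n%:R * upsilon k.
Definition phivec : 'cV[R]_n := \col_k phi k.

Definition Lmat : 'M[R]_n :=
  \matrix_(k, j) (1 / phi k * wcoef j * acoef j * Mcoef k j).
Definition Vvec : 'cV[R]_n := \col_k (n%:R / (gam k * sigma ^+ 2 * phi k)).
Definition Cterm (k : 'I_n) : R :=
  1 / (sigma * sqn) * \sum_(j < n) (1 - zeta j) / Theta j * Mcoef k j.
Definition rterm (k : 'I_n) : R :=
  1 / (sigma * sqn) * (rho k * nu k / c k * pcoef k k).
Definition Uvec : 'cV[R]_n := \col_k (- (1 / phi k) * (Cterm k + rterm k)).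

End Model.

Definition eigenvalueC (R : rcfType) (m : nat) (B : 'M[R]_m) (lam : R[i]) : bool :=
  root (char_poly (map_mx (fun x : R => (x%:C)%C) B)) lam.

Definition spectral_radius_lt (R : rcfType) (m : nat) (B : 'M[R]_m) (s : R) : Prop :=
  forall lam : R[i], eigenvalueC B lam -> `|lam| < (s%:C)%C.

Definition entrywise_nonneg (R : rcfType) (m p : nat) (A : 'M[R]_(m, p)) : Prop :=
  forall i j, 0 <= A i j.

Definition nonsingular_Mmatrix (R : rcfType) (m : nat) (A : 'M[R]_m) : Prop :=
  exists (s : R) (B : 'M[R]_m),
    entrywise_nonneg B /\ A = s%:M - B /\ spectral_radius_lt B s.

(* Main.v *)
Require Import Defs.
From HB Require Import structures.
From mathcomp Require Import all_boot all_order all_algebra.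
From mathcomp Require Import complex.
From mathcomp Require Import ring lra.
Import Order.TTheory GRing.Theory Num.Theory.
Local Open Scope ring_scope.
Local Open Scope complex_scope.

Lemma sum_delta (F : numDomainType) n (k : 'I_n) (G : 'I_n -> F) :
  \sum_(j < n) (if k == j then G j else 0) = G k.
Proof.
rewrite (bigD1 k) //= eqxx big1 ?addr0 // => j; rewrite eq_sym => /negbTE ->//.
Qed.


Lemma weighted (F : numDomainType) m (Lm : 'I_m -> 'I_m -> F) (ph y : 'I_m -> F) (l : F) :
  (forall k j, 0 <= Lm k j) -> (forall k, 0 < ph k) ->
  (forall j, \sum_(k < m) ph k * Lm k j < ph j) ->
  (forall k, 0 <= y k) -> (forall k, l * y k <= \sum_(j < m) Lm k j * y j) ->
  forall j0, 0 < y j0 ->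
  l * \sum_(k < m) ph k * y k < \sum_(k < m) ph k * y k.
Proof.
move=> hL hph hLT hy hl j0 hj0.
rewrite mulr_sumr.
apply: (@le_lt_trans _ _ (\sum_(k < m) ph k * \sum_(j < m) Lm k j * y j)).
  apply: ler_sum => k _; rewrite mulrCA; apply: ler_wpM2l; [exact: ltW|exact: hl].
have -> : \sum_(k < m) ph k * \sum_(j < m) Lm k j * y j =
          \sum_(j < m) (\sum_(k < m) ph k * Lm k j) * y j.
  under eq_bigr do rewrite mulr_sumr.
  rewrite exchange_big; apply: eq_bigr => j _; rewrite mulr_suml.
  by apply: eq_bigr => k _; rewrite mulrA.
rewrite [X in X < _](bigD1 j0) // [X in _ < X](bigD1 j0) //=.
apply: ltr_leD; first by rewrite ltr_pM2r.
apply: ler_sum => k _; rewrite [X in _ <= X]mulrC [X in X <= _]mulrC.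
by apply: ler_wpM2l => //; apply: ltW.
Qed.

Lemma sum_delta' (F : numDomainType) n (k : 'I_n) (G : 'I_n -> F) :
  \sum_(j < n) (if j == k then G j else 0) = G k.
Proof.
rewrite (bigD1 k) //= eqxx big1 ?addr0 // => j /negbTE -> //.
Qed.

Section S.
Variable R : rcfType.
Variable n : nat.
Variable sigma : R.
Variables (c gam nu rho : 'I_n -> R).
Hypothesis hn : (0 < n)%N.
Hypothesis hsigma : 0 < sigma.
Hypothesis hc : forall i, 0 < c i.
Hypothesis hgam : forall i, 0 < gam i.
Hypothesis hnu : forall i, 0 < nu i.
Hypothesis hrho : forall i, -1 < rho i < 1.

Local Notation p := (pcoef c gam nu).

Ltac pos := repeat first [ done | apply: mulr_gt0 | apply: addr_gt0 | apply: divr_gt0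
  | apply: exprn_gt0 | rewrite invr_gt0 | apply: ltr01 | apply: hc | apply: hgam | apply: hnu | apply: hsigma ].
Ltac nz := rewrite ?gt_eqF //; pos.

Lemma p_pos k j : 0 < p k j.
Proof.
by rewrite /pcoef; case: eqP => _; pos.
Qed.

Lemma gp k j : gam k * nu j ^+ 2 * p k j = 1 - (if k == j then zeta c gam nu j else 0).
Proof.
have := hgam k; have := hnu j; have := hc j => h1 h2 h3.
rewrite /zeta /pcoef; case: eqP => [->|_]; last by rewrite subr0; field; nz.
rewrite eqxx; have hh : gam j * nu j ^+ 2 + 1 / c j != 0 by nz.
field; nz.
Qed.

Lemma Theta_pos j : 0 < Theta c gam nu j.
Proof.
rewrite /Theta (bigD1 j) //= ltr_wpDr ?p_pos //.
by apply: sumr_ge0 => i _; rewrite ltW ?p_pos.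
Qed.

Lemma zeta_ge0 j : 0 <= zeta c gam nu j.
Proof. by rewrite /zeta divr_ge0 ?ltW ?p_pos. Qed.

Lemma zeta_lt1 j : zeta c gam nu j < 1.
Proof.
have := gp j j; rewrite eqxx => h.
have : 0 < gam j * nu j ^+ 2 * p j j by pos; apply: p_pos.
rewrite h; lra.
Qed.

Lemma sumrho2 : \sum_(j < n) rho j ^+ 2 < n%:R.
Proof.
have -> : (n%:R : R) = \sum_(j < n) 1 by rewrite sumr_const card_ord.
have h2 i : rho i ^+ 2 < 1.
  have := hrho i; case/andP => a b.
  rewrite -subr_gt0 -(@expr1n R 2) subr_sqr mulr_gt0 //; lra.
pose i0 := Ordinal hn.
rewrite [X in X < _](bigD1 i0) // [X in _ < X](bigD1 i0) //=.
by apply: ltr_leD => //; apply: ler_sum => i _; apply: ltW.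
Qed.

Lemma nR_pos : 0 < (n%:R : R).
Proof. by rewrite ltr0n. Qed.

Lemma gups k : gam k * upsilon c gam nu rho k = \sum_(j < n) rho j ^+ 2 - rho k ^+ 2 * zeta c gam nu k.
Proof.
rewrite /upsilon mulr_sumr.
transitivity (\sum_(j < n) (rho j ^+ 2 - (if k == j then rho j ^+ 2 * zeta c gam nu j else 0))).
  apply: eq_bigr => j _.
  transitivity (rho j ^+ 2 * (gam k * nu j ^+ 2 * p k j)); first ring.
  by rewrite gp; case: (k == j); ring.
by rewrite sumrB sum_delta.
Qed.

Lemma phiE k : phi c gam nu rho k = 1 - (\sum_(j < n) rho j ^+ 2 - rho k ^+ 2 * zeta c gam nu k) / n%:R.
Proof. by rewrite /phi -gups mulrAC. Qed.

Lemma phi_gt k : rho k ^+ 2 * zeta c gam nu k / n%:R < phi c gam nu rho k.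
Proof.
rewrite phiE -subr_gt0.
have hN := nR_pos; have hs := sumrho2.
have -> : 1 - (\sum_(j < n) rho j ^+ 2 - rho k ^+ 2 * zeta c gam nu k) / n%:R -
    rho k ^+ 2 * zeta c gam nu k / n%:R = (n%:R - \sum_(j < n) rho j ^+ 2) / n%:R.
  by field; rewrite gt_eqF.
by rewrite divr_gt0 // subr_gt0.
Qed.

Lemma phi_pos k : 0 < phi c gam nu rho k.
Proof.
apply: le_lt_trans (phi_gt k).
by rewrite divr_ge0 ?ler0n // mulr_ge0 ?sqr_ge0 ?zeta_ge0.
Qed.

Lemma LE k j : Lmat c gam nu rho k j =
  rho j ^+ 2 * zeta c gam nu j * p k j / (n%:R * phi c gam nu rho k * Theta c gam nu j).
Proof.
rewrite mxE /wcoef /acoef /Mcoef.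
have := phi_pos k; have := Theta_pos j; have := hnu j; have := nR_pos => *.
by field; rewrite ?gt_eqF //; pos; rewrite ?nR_pos ?phi_pos ?Theta_pos.
Qed.

Lemma L_ge0 k j : 0 <= Lmat c gam nu rho k j.
Proof.
rewrite LE; apply: divr_ge0; first by apply: mulr_ge0; [apply: mulr_ge0; [apply: sqr_ge0 | apply: zeta_ge0] | apply: ltW; apply: p_pos].
by apply: ltW; apply: mulr_gt0; [apply: mulr_gt0|]; [apply: nR_pos|apply: phi_pos|apply: Theta_pos].
Qed.

Lemma LT_phi j : \sum_(k < n) phi c gam nu rho k * Lmat c gam nu rho k j = rho j ^+ 2 * zeta c gam nu j / n%:R.
Proof.
transitivity (\sum_(k < n) (rho j ^+ 2 * zeta c gam nu j / (n%:R * Theta c gam nu j)) * p k j).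
  apply: eq_bigr => k _; rewrite LE.
  have := phi_pos k; have := Theta_pos j; have := nR_pos => *.
  by field; rewrite ?gt_eqF //; pos; rewrite ?nR_pos ?phi_pos ?Theta_pos.
rewrite -mulr_sumr -/(Theta c gam nu j).
have := Theta_pos j; have := nR_pos => *.
by field; rewrite ?gt_eqF //; pos; rewrite ?nR_pos ?phi_pos ?Theta_pos.
Qed.


Local Notation L := (Lmat c gam nu rho).
Local Notation IL := (1%:M - Lmat c gam nu rho : 'M[R]_n).

Lemma LTphi_lt j : \sum_(k < n) phi c gam nu rho k * L k j < phi c gam nu rho j.
Proof. by rewrite LT_phi phi_gt. Qed.

Lemma IL_mul (x : 'cV[R]_n) k : (IL *m x) k 0 = x k 0 - \sum_(j < n) L k j * x j 0.
Proof.
by rewrite mulmxBl mul1mx !mxE.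
Qed.

Lemma IL_nonneg (x : 'cV[R]_n) : (forall k, 0 <= (IL *m x) k 0) -> forall k, 0 <= x k 0.
Proof.
move=> hx k0; rewrite leNgt; apply/negP => hk0.
pose y k := if x k 0 < 0 then - x k 0 else 0.
have hy k : 0 <= y k by rewrite /y; case: ifP => // /ltW; rewrite oppr_ge0.
have hxy k : - x k 0 <= y k by rewrite /y; case: ifP => // /negbT; rewrite -leNgt oppr_le0.
have hl k : 1 * y k <= \sum_(j < n) L k j * y j.
  rewrite mul1r /y; case: ifP => hk; last by apply: sumr_ge0 => j _; apply: mulr_ge0; [apply: L_ge0|apply: hy].
  have := hx k; rewrite IL_mul subr_ge0 -lerN2 => h; apply: le_trans h _.
  rewrite -sumrN; apply: ler_sum => j _; rewrite -mulrN; apply: ler_wpM2l; [exact: L_ge0|exact: hxy].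
have hy0 : 0 < y k0 by rewrite /y hk0 oppr_gt0.
have := @weighted R n L _ _ 1 L_ge0 phi_pos LTphi_lt hy hl k0 hy0.
by rewrite mul1r ltxx.
Qed.

Lemma IL_unit : IL \in unitmx.
Proof.
rewrite unitmxE unitfE -det_tr; apply/negP => /det0P [v vn0 hv].
have hA : IL *m v^T = 0 by rewrite -[IL]trmxK -trmx_mul hv trmx0.
have h1 := IL_nonneg (v^T); have h2 := IL_nonneg (- v^T).
move/negP: vn0; apply; apply/eqP/matrixP => i j; rewrite ord1 mxE.
apply/le_anti/andP; split.
  have := h2 _ j; rewrite mxE oppr_ge0 mxE; apply.
  by move=> k; rewrite mulmxN hA oppr0 mxE.
have := h1 _ j; rewrite mxE; apply.
by move=> k; rewrite hA mxE.
Qed.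

Lemma inv_nonneg : entrywise_nonneg (invmx IL).
Proof.
move=> i j.
have -> : invmx IL i j = (invmx IL *m delta_mx j (0:'I_1)) i 0 by rewrite -colE mxE.
apply: IL_nonneg => k.
by rewrite mulmxA mulmxV ?IL_unit // mul1mx mxE; case: (_ && _).
Qed.

Lemma spec_lt : spectral_radius_lt L 1.
Proof.
move=> lam; rewrite /eigenvalueC => hr.
set A := map_mx _ L in hr.
have hd : \det (lam%:M - A) == 0.
  rewrite -eigenvalue_root_char in hr; case/eigenvalueP: hr => v hv vn0.
  by apply/det0P; exists v => //; rewrite mulmxBr hv mul_mx_scalar subrr.
move: hd; rewrite -det_tr => /det0P [v vn0 hv].
have hv2 : v *m A^T = lam *: v.
  move: hv; rewrite linearB /= tr_scalar_mx mulmxBr mul_mx_scalar => /eqP.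
  by rewrite subr_eq0 => /eqP <-.
have hk k : lam * v 0 k = \sum_(j < n) (L k j)%:C * v 0 j.
  move/matrixP: hv2 => /(_ 0 k); rewrite !mxE => <-.
  by apply: eq_bigr => j _; rewrite !mxE mulrC.
have [j0 hj0] : exists j0, v 0 j0 != 0.
  apply/existsP; move: vn0; apply: contraR; rewrite negb_exists => /forallP h.
  by apply/eqP/matrixP => i j; rewrite ord1 !mxE; apply/eqP/negPn/h.
have hLc k j : 0 <= (L k j)%:C by rewrite ler0c L_ge0.
have hphc k : 0 < (phi c gam nu rho k)%:C.
  by have := phi_pos k; rewrite -(ltcR 0) rmorph0.
have hLT j : \sum_(k < n) (phi c gam nu rho k)%:C * (L k j)%:C < (phi c gam nu rho j)%:C.
  by under eq_bigr do rewrite -rmorphM; rewrite -rmorph_sum ltcR LTphi_lt.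
have hy k : 0 <= `|v 0 k| by [].
have hl k : `|lam| * `|v 0 k| <= \sum_(j < n) (L k j)%:C * `|v 0 j|.
  rewrite -normrM hk; apply: le_trans (ler_norm_sum _ _ _) _.
  by apply: ler_sum => j _; rewrite normrM ger0_norm.
have hy0 : 0 < `|v 0 j0| by rewrite normr_gt0.
have := @weighted _ n (fun k j => (L k j)%:C) (fun k => (phi c gam nu rho k)%:C)
   (fun k => `|v 0 k|) `|lam| hLc hphc hLT hy hl j0 hy0.
set S := \sum_(k < n) _ => hS.
have S0 : 0 <= S by apply: sumr_ge0 => k _; apply: mulr_ge0 => //; apply: ltW.
have Sp : 0 < S.
  rewrite lt_def S0 andbT; apply/eqP => S00; move: hS; rewrite S00 mulr0 ltxx //.
by rewrite rmorph1 -(ltr_pM2r Sp) mul1r.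
Qed.

Definition sq := Num.sqrt (n%:R : R).
Definition uu := invmx IL *m Vvec sigma c gam nu rho.
Definition vv := invmx IL *m Uvec sigma c gam nu rho.
Definition th := - (\sum_(k < n) vv k 0) / (\sum_(k < n) uu k 0).
Definition zS := th *: uu + vv.
Definition mu j := 1 / (n%:R * Theta c gam nu j)
        * (1 - zeta c gam nu j - sigma / sq * acoef c gam nu rho j * zS j 0).
Definition zQ : 'M[R]_n := \matrix_(i < n, j < n)
      (p i j * (n%:R * mu j + (if i == j then 1 / c i else 0)
           - gam i * sigma / sq * zS i 0 * rho j * nu j)).

Lemma sq_pos : 0 < sq.
Proof. by rewrite /sq sqrtr_gt0 nR_pos. Qed.

Ltac pos2 := repeat first [ done | apply: phi_pos | apply: Theta_pos | apply: nR_pos | apply: sq_pos | apply: p_pos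
  | apply: mulr_gt0 | apply: divr_gt0 | apply: addr_gt0
  | apply: exprn_gt0 | rewrite invr_gt0 | apply: ltr01 | apply: hc | apply: hgam | apply: hnu | apply: hsigma ].
Ltac nz2 := rewrite ?gt_eqF //; pos2.

Lemma sq2 : sq ^+ 2 = n%:R.
Proof. by rewrite /sq sqr_sqrtr // ler0n. Qed.

Lemma V_pos k : 0 < Vvec sigma c gam nu rho k 0.
Proof.
rewrite mxE; apply: divr_gt0; first exact: nR_pos.
by apply: mulr_gt0; [pos|apply: phi_pos].
Qed.

Lemma ILu : IL *m uu = Vvec sigma c gam nu rho.
Proof. by rewrite /uu mulmxA mulmxV ?IL_unit // mul1mx. Qed.

Lemma ILv : IL *m vv = Uvec sigma c gam nu rho.
Proof. by rewrite /vv mulmxA mulmxV ?IL_unit // mul1mx. Qed.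

Lemma uu_pos k : 0 < uu k 0.
Proof.
have hu : forall k, 0 <= uu k 0.
  by apply: IL_nonneg => k'; rewrite ILu ltW ?V_pos.
have := V_pos k; rewrite -ILu IL_mul => h; apply: lt_le_trans h _.
rewrite lerBlDr lerDl; apply: sumr_ge0 => j _; apply: mulr_ge0; [apply: L_ge0|apply: hu].
Qed.

Lemma sumu_pos : 0 < \sum_(k < n) uu k 0.
Proof.
rewrite (bigD1 (Ordinal hn)) //=; apply: ltr_wpDr; last exact: uu_pos.
by apply: sumr_ge0 => k _; apply: ltW; apply: uu_pos.
Qed.

Lemma sumzS : \sum_(k < n) zS k 0 = 0.
Proof.
have hu := sumu_pos.
have -> : \sum_(k < n) zS k 0 = th * \sum_(k < n) uu k 0 + \sum_(k < n) vv k 0.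
  by rewrite mulr_sumr -big_split; apply: eq_bigr => k _; rewrite !mxE.
by rewrite /th; field; rewrite gt_eqF.
Qed.

Lemma ILzS k : zS k 0 - \sum_(j < n) L k j * zS j 0 =
   th * Vvec sigma c gam nu rho k 0 + Uvec sigma c gam nu rho k 0.
Proof.
rewrite -IL_mul /zS mulmxDr -scalemxAr ILu ILv.
by rewrite !mxE.
Qed.

Lemma colsum j : \sum_(i < n) zQ i j = 1.
Proof.
have hs := sq_pos.
have e1 i : zQ i j = p i j * (n%:R * mu j) + (if i == j then zeta c gam nu j else 0)
   - (sigma / sq * rho j * nu j / nu j ^+ 2) * (zS i 0 - (if i == j then zeta c gam nu j * zS i 0 else 0)).
  rewrite mxE /zeta /pcoef; case: eqP => [->|ne]; rewrite ?eqxx.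
    have hh : gam j * nu j ^+ 2 + 1 / c j != 0 by nz2.
    by field; nz2.
  by field; nz2.
rewrite (eq_bigr _ (fun i _ => e1 i)).
rewrite sumrB big_split /= -mulr_suml sum_delta' -mulr_sumr sumrB sum_delta' sumzS -/(Theta c gam nu j).
rewrite /mu /acoef /zeta.
have := Theta_pos j; have := nR_pos => *.
by field; nz2.
Qed.

Definition Gf (Q : 'M[R]_n) (S : 'cV[R]_n) i j :=
  (if i == j then (1 - Q i i) / c i else 0) - gam i * nu j ^+ 2 * Q i j
  - gam i * sigma / sq * S i 0 * (rho j * nu j).
Definition Hf (Q : 'M[R]_n) (S : 'cV[R]_n) i :=
  gam i * sigma ^+ 2 * S i 0 + gam i * sigma / sq * \sum_(j < n) rho j * nu j * Q i j.

Lemma Gz i j : Gf zQ zS i j = - (n%:R * mu j).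
Proof.
have hs := sq_pos.
rewrite /Gf; case: (eqVneq i j) => [<-|ne]; rewrite !mxE ?eqxx ?(negbTE ne) /pcoef ?eqxx ?(negbTE ne).
  have hh : gam i * nu i ^+ 2 + 1 / c i != 0 by nz2.
  by field; nz2.
by field; nz2.
Qed.

Lemma Hz i : Hf zQ zS i = n%:R * th.
Proof.
have hs := sq_pos; have hN := nR_pos; have hph := phi_pos i.
set K := sigma / sq * n%:R * phi c gam nu rho i.
have e2 j : rho j * nu j * zQ i j =
   sigma * sq * (1 / (sigma * sq) * ((1 - zeta c gam nu j) / Theta c gam nu j * Mcoef c gam nu rho i j))
   - K * (L i j * zS j 0)
   + (if i == j then sigma * sq * (1 / (sigma * sq) * (rho i * nu i / c i * p i i)) else 0)
   - gam i * sigma / sq * zS i 0 * (rho j ^+ 2 * nu j ^+ 2 * p i j).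
  have := Theta_pos j => hT.
  rewrite [zQ _ _]mxE [Lmat _ _ _ _ _ _]mxE /K /mu /wcoef /acoef /Mcoef; case: eqP => [<-|_].
    by field; nz2.
  by field; nz2.
have e3 : \sum_(j < n) rho j * nu j * zQ i j =
  sigma * sq * Cterm sigma c gam nu rho i - K * \sum_(j < n) L i j * zS j 0
  + sigma * sq * rterm sigma c gam nu rho i
  - gam i * sigma / sq * zS i 0 * upsilon c gam nu rho i.
  rewrite (eq_bigr _ (fun j _ => e2 j)) !sumrB !big_split /= sum_delta.
  by rewrite sumrN -!mulr_sumr /Cterm /rterm /upsilon; ring.
have hL := ILzS i.
have hu : upsilon c gam nu rho i = (1 - phi c gam nu rho i) * n%:R / gam i.
  by rewrite /phi; field; nz2.
rewrite /Hf e3 hu.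
have -> : \sum_(j < n) L i j * zS j 0 =
   zS i 0 - (th * Vvec sigma c gam nu rho i 0 + Uvec sigma c gam nu rho i 0) by rewrite -hL; ring.
rewrite /K !mxE -sq2.
by field; nz2.
Qed.

Definition br (Q : 'M[R]_n) (S : 'cV[R]_n) i :=
  Q i i ^+ 2 / (2 * c i) + gam i / 2 * \sum_(j < n) nu j ^+ 2 * Q i j ^+ 2
  + gam i * sigma ^+ 2 / 2 * S i 0 ^+ 2
  + gam i * sigma / sq * S i 0 * \sum_(j < n) rho j * nu j * Q i j.

Lemma gobjE Q S : gobj sigma c gam nu rho Q S = - (1 / n%:R) * \sum_(i < n) (br Q S i - Q i i / c i).
Proof. by rewrite /gobj /br sumrB /sq; ring. Qed.

Lemma br_expand i (Q D : 'M[R]_n) (S E : 'cV[R]_n) (m : 'I_n -> R) t :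
  (forall j, Gf Q S i j = m j) -> Hf Q S i = t ->
  br (Q + D) (S + E) i - (Q + D) i i / c i =
  br Q S i - Q i i / c i + br D E i - \sum_(j < n) m j * D i j + t * E i 0.
Proof.
move=> hG hH.
have s1 : \sum_(j < n) m j * D i j = (1 - Q i i) / c i * D i i
    - gam i * \sum_(j < n) nu j ^+ 2 * Q i j * D i j
    - gam i * sigma / sq * S i 0 * \sum_(j < n) rho j * nu j * D i j.
  have e j : m j * D i j = (if i == j then (1 - Q i i) / c i * D i j else 0)
     - gam i * (nu j ^+ 2 * Q i j * D i j) - gam i * sigma / sq * S i 0 * (rho j * nu j * D i j).
    by rewrite -hG /Gf; case: eqP => _; ring.
  by rewrite (eq_bigr _ (fun j _ => e j)) !sumrB sum_delta -!mulr_sumr.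
have s2 : \sum_(j < n) nu j ^+ 2 * (Q + D) i j ^+ 2 = \sum_(j < n) nu j ^+ 2 * Q i j ^+ 2
   + \sum_(j < n) nu j ^+ 2 * D i j ^+ 2 + 2 * \sum_(j < n) nu j ^+ 2 * Q i j * D i j.
  rewrite mulr_sumr -!big_split; apply: eq_bigr => j _; rewrite mxE /=; ring.
have s3 : \sum_(j < n) rho j * nu j * (Q + D) i j = \sum_(j < n) rho j * nu j * Q i j
   + \sum_(j < n) rho j * nu j * D i j.
  rewrite -!big_split; apply: eq_bigr => j _; rewrite mxE /=; ring.
rewrite /br s2 s3 s1 -hH /Hf !mxE /=; field; nz2.
Qed.

Lemma w_pos : 0 < 1 - (\sum_(j < n) rho j ^+ 2) / n%:R.
Proof.
have := sumrho2; have := nR_pos => h1 h2.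
rewrite subr_gt0 ltr_pdivrMr // mul1r //.
Qed.

Lemma brE (D : 'M[R]_n) (E : 'cV[R]_n) i : br D E i = D i i ^+ 2 / (2 * c i) + gam i / 2 *
   (\sum_(j < n) (nu j * D i j + sigma * E i 0 * rho j / sq) ^+ 2
    + sigma ^+ 2 * E i 0 ^+ 2 * (1 - (\sum_(j < n) rho j ^+ 2) / n%:R)).
Proof.
have hs := sq_pos.
have e : \sum_(j < n) (nu j * D i j + sigma * E i 0 * rho j / sq) ^+ 2 =
  \sum_(j < n) nu j ^+ 2 * D i j ^+ 2 + 2 * sigma * E i 0 / sq * \sum_(j < n) rho j * nu j * D i j
  + sigma ^+ 2 * E i 0 ^+ 2 / sq ^+ 2 * \sum_(j < n) rho j ^+ 2.
  rewrite !mulr_sumr -!big_split; apply: eq_bigr => j _ /=; field; nz2.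
rewrite e /br -sq2; field; nz2.
Qed.

Lemma br_ge0 (D : 'M[R]_n) (E : 'cV[R]_n) i : 0 <= br D E i.
Proof.
have hw := w_pos.
rewrite brE; apply: addr_ge0.
  by apply: divr_ge0; [apply: sqr_ge0| apply: ltW; pos2].
apply: mulr_ge0; first by apply: ltW; pos2.
apply: addr_ge0; first by apply: sumr_ge0 => j _; apply: sqr_ge0.
by apply: mulr_ge0 => //; [apply: mulr_ge0; apply: sqr_ge0 | apply: ltW].
Qed.

Lemma br_pos (D : 'M[R]_n) (E : 'cV[R]_n) i : (E i 0 != 0) || [exists j, D i j != 0] -> 0 < br D E i.
Proof.
move=> h; have hw := w_pos.
rewrite brE; apply: ltr_wpDl.
  by apply: divr_ge0; [apply: sqr_ge0| apply: ltW; pos2].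
apply: mulr_gt0; first by pos2.
have hsum : 0 <= \sum_(j < n) (nu j * D i j + sigma * E i 0 * rho j / sq) ^+ 2.
  by apply: sumr_ge0 => j _; apply: sqr_ge0.
case: (eqVneq (E i 0) 0) h => [E0 | En0] /= h.
  case/existsP: h => j hj.
  apply: ltr_pwDl; last by rewrite E0 expr0n /= mulr0 mul0r.
  rewrite (bigD1 j) //= ltr_wpDr //; first by apply: sumr_ge0 => k _; apply: sqr_ge0.
  by rewrite E0 !(mulr0, mul0r) addr0 lt_def sqr_ge0 andbT sqrf_eq0 mulf_neq0 // gt_eqF.
apply: ltr_wpDl => //.
apply: mulr_gt0 => //; apply: mulr_gt0; first by apply: exprn_gt0.
by rewrite lt_def sqr_ge0 andbT sqrf_eq0.
Qed.

Lemma opt (Q' : 'M[R]_n) (S' : 'cV[R]_n) : feasible Q' S' -> (Q', S') <> (zQ, zS) ->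
  gobj sigma c gam nu rho Q' S' < gobj sigma c gam nu rho zQ zS.
Proof.
case=> hQ' hS' hne.
set D := Q' - zQ; set E := S' - zS.
have eQ : Q' = zQ + D by rewrite /D addrC subrK.
have eS : S' = zS + E by rewrite /E addrC subrK.
have hD j : \sum_(i < n) D i j = 0.
  have e i : D i j = Q' i j - zQ i j by rewrite /D !mxE.
  by rewrite (eq_bigr _ (fun i _ => e i)) sumrB hQ' colsum subrr.
have hE : \sum_(i < n) E i 0 = 0.
  have e i : E i 0 = S' i 0 - zS i 0 by rewrite /E !mxE.
  by rewrite (eq_bigr _ (fun i _ => e i)) sumrB hS' sumzS subrr.
rewrite !gobjE eQ eS.
under eq_bigr => i _ do rewrite (@br_expand i zQ D zS E (fun j => - (n%:R * mu j)) (n%:R * th) (Gz i) (Hz i)).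
rewrite big_split /= big_split /= big_split /= sumrN.
have -> : \sum_(i < n) \sum_(j < n) - (n%:R * mu j) * D i j = 0.
  rewrite exchange_big; apply: big1 => j _ /=.
  by rewrite -mulr_sumr hD mulr0.
rewrite -mulr_sumr hE mulr0 oppr0 !addr0.
set SA := \sum_(i < n) _.
set SB := \sum_(i < n) br D E i.
have hSB : 0 < SB.
  case: (boolP [exists i, (E i 0 != 0) || [exists j, D i j != 0]]) => [/existsP [i0 hi0] | hall].
    rewrite /SB (bigD1 i0) //= ltr_wpDr //; last exact: br_pos.
    by apply: sumr_ge0 => i _; apply: br_ge0.
  exfalso; apply: hne.
  have hD0 : D = 0.
    apply/matrixP => i j; rewrite [X in _ = X]mxE.
    move: hall; rewrite negb_exists => /forallP /(_ i); rewrite negb_or negb_exists.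
    by case/andP => _ /forallP /(_ j); rewrite negbK => /eqP.
  have hE0 : E = 0.
    apply/matrixP => i j; rewrite [X in _ = X]mxE ord1.
    move: hall; rewrite negb_exists => /forallP /(_ i); rewrite negb_or negbK.
    by case/andP => /eqP.
  by rewrite eQ eS hD0 hE0 !addr0.
have hN := nR_pos.
have h1 : 0 < 1 / n%:R * SB by pos2.
rewrite mulrDr; lra.
Qed.

End S.

Theorem mainTheorem8 (R : rcfType) (n : nat) (sigma : R)
    (c gam nu rho : 'I_n -> R)
    (hn : (0 < n)%N) (hsigma : 0 < sigma)
    (hc : forall i, 0 < c i) (hgam : forall i, 0 < gam i)
    (hnu : forall i, 0 < nu i) (hrho : forall i, -1 < rho i < 1) :
  let L := Lmat c gam nu rho in
  let phin := phivec c gam nu rho in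
  let IL := (1%:M - L : 'M[R]_n) in
  let u := invmx IL *m Vvec sigma c gam nu rho in
  let v := invmx IL *m Uvec sigma c gam nu rho in
  let theta := - (\sum_(k < n) v k 0) / (\sum_(k < n) u k 0) in
  let zS := theta *: u + v in
  let mu := fun j : 'I_n =>
      1 / (n%:R * Theta c gam nu j)
        * (1 - zeta c gam nu j
           - sigma / Num.sqrt (n%:R) * acoef c gam nu rho j * zS j 0) in
  let zQ := \matrix_(i < n, j < n)
      (pcoef c gam nu i j
        * (n%:R * mu j + (if i == j then 1 / c i else 0)
           - gam i * sigma / Num.sqrt (n%:R) * zS i 0 * rho j * nu j)) in
  entrywise_nonneg L /\
  (forall k, (L^T *m phin) k 0 < phin k 0) /\
  spectral_radius_lt L 1 /\
  nonsingular_Mmatrix IL /\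
  entrywise_nonneg (invmx IL) /\
  \sum_(k < n) u k 0 != 0 /\
  (feasible zQ zS /\
      (forall (zQ' : 'M[R]_n) (zS' : 'cV[R]_n), feasible zQ' zS' ->
         (zQ', zS') <> (zQ, zS) ->
         gobj sigma c gam nu rho zQ' zS' < gobj sigma c gam nu rho zQ zS)).

Proof.
move=> L phin IL u v theta zS mu zQ.
split; first by move=> k j; apply: L_ge0.
split.
  move=> k; rewrite !mxE.
  have := @LTphi_lt R n c gam nu rho hn hc hgam hnu hrho k.
  congr (_ < _); apply: eq_bigr => j _; rewrite !mxE mulrC //.
split; first by apply: spec_lt.
split.
  exists 1, L; split; first by move=> k j; apply: L_ge0.
  by split => //; apply: spec_lt.
split; first by apply: inv_nonneg.
split; first by rewrite gt_eqF //; apply: sumu_pos.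
split; first by split; [move=> j; apply: colsum | apply: sumzS].
by move=> zQ' zS' hf hne; apply: opt.
Qed.
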